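(* Fix $p\in\{1,2\}$ and an integer $L\ge 1$. Let $N_0 = N_D+1$ and $\mathcal{D}_0=\mathcal{D}\subset\mathbb{R}^{N_D+1}$ be compact, and for $\ell=1,\dots,L$ let $\mathcal{D}_\ell\subset\mathbb{R}^{N_\ell}$ be compact and let $\mathbf{u}_\ell:\mathcal{D}_\ell\to\mathcal{D}_{\ell-1}$ be continuous and Lipschitz with constant $l_{\mathbf{u}_\ell}$. Define recursively $\mathbf{f}_0(\mathbf{x})=\mathbf{x}$ on $\mathcal{D}$ and $\mathbf{f}_\ell(\mathbf{x}_\ell) = \mathbf{f}_{\ell-1}(\mathbf{u}_\ell(\mathbf{x}_\ell))$ for $\mathbf{x}_\ell\in\mathcal{D}_\ell$, so $\mathbf{f}_\ell:\mathcal{D}_\ell\to\mathcal{D}$, and assume each $\mathbf{f}_\ell$ is Lipschitz with constant $l_{\mathbf{f}_\ell}$ with respect to $\|\cdot\|_p$, i.e. $\|\mathbf{f}_\ell(\mathbf{a})-\mathbf{f}_\ell(\mathbf{b})\|_p\le l_{\mathbf{f}_\ell}\|\mathbf{a}-\mathbf{b}\|_p$, with $l_{\mathbf{f}_0}=1$. Let $\hat{\mathbf{u}}_\ell:\mathcal{D}_\ell\to\mathcal{D}_{\ell-1}$ ($\ell=1,\dots,L$) be arbitrary approximations of $\mathbf{u}_\ell$, and define $\hat{\mathbf{f}}_0(\mathbf{x})=\mathbf{x}$ and $\hat{\mathbf{f}}_\ell(\mathbf{x}_\ell)=\hat{\mathbf{f}}_{\ell-1}(\hat{\mathbf{u}}_\ell(\mathbf{x}_\ell))$.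 For $1\le\ell\le L$ and $\mathbf{x}_\ell\in\mathcal{D}_\ell$, define the approximate intermediate points $\hat{\mathbf{x}}_\ell=\mathbf{x}_\ell$ and $\hat{\mathbf{x}}_{i-1}=\hat{\mathbf{u}}_i(\hat{\mathbf{x}}_i)$ for $i=\ell,\dots,1$, and the layer error vectors $\mathbf{e}_{u,i} = \mathbf{u}_i(\hat{\mathbf{x}}_i)-\hat{\mathbf{u}}_i(\hat{\mathbf{x}}_i)$. Let $\mathbf{e}_{f,\ell}=\mathbf{f}_\ell(\mathbf{x}_\ell)-\hat{\mathbf{f}}_\ell(\mathbf{x}_\ell)$ with components $e_{f,\ell,k}$. Then for every $1\le\ell\le L$, every $\mathbf{x}_\ell\in\mathcal{D}_\ell$ and every component $k$, $$|e_{f,\ell,k}| \le \sum_{i=1}^{\ell} \|\mathbf{e}_{u,i}\|_p\cdot l_{\mathbf{f}_{i-1}} .$$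
   Context: This models a deep network as a composition of layers/function blocks $\mathbf{u}_\ell$, each replaced by an approximation $\hat{\mathbf{u}}_\ell$ (a known layer has $\hat{\mathbf{u}}_\ell=\mathbf{u}_\ell$, hence zero error). The vector $\mathbf{x}\in\mathbb{R}^{N_D+1}$ uses the extended-vector (bias-absorbing) convention. *)

(* Defs.v *)
From HB Require Import structures.
From mathcomp Require Import all_boot all_order all_algebra.
From mathcomp Require Import all_classical all_reals all_analysis.
Set Implicit Arguments. Unset Strict Implicit. Unset Printing Implicit Defensive.
Import Order.TTheory GRing.Theory Num.Theory.
Local Open Scope ring_scope.
Local Open Scope classical_set_scope.

Definition pnorm {R : realType} (p : nat) {n : nat} (v : 'rV[R]_n) : R :=
  (\sum_(j < n) `|v ord0 j| ^+ p) `^ (p%:R^-1).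

Definition lipschitz_pnorm_on {R : realType} (p : nat) {m n : nat}
  (A : set 'rV[R]_m) (g : 'rV[R]_m -> 'rV[R]_n) (c : R) : Prop :=
  forall a b, A a -> A b -> pnorm p (g a - g b) <= c * pnorm p (a - b).

(* Composition of layers: f_0 = id, f_(l+1) x = f_l (u_(l+1) x).
   Layer u i maps R^(N i) to R^(N (i-1)) (only i >= 1 is used). *)
Fixpoint compose_layers {R : realType} (N : nat -> nat)
  (u : forall i : nat, 'rV[R]_(N i) -> 'rV[R]_(N i.-1)) (l : nat)
  : 'rV[R]_(N l) -> 'rV[R]_(N 0%N) :=
  match l with
  | 0%N => fun x => x
  | l'.+1 => fun x => @compose_layers R N u l' (u l'.+1 x)
  end.

(* Main.v *)
Require Import Defs.
From HB Require Import structures.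
From mathcomp Require Import all_boot all_order all_algebra.
From mathcomp Require Import all_classical all_reals all_analysis.
From mathcomp Require Import zify.
Import Order.TTheory GRing.Theory Num.Theory.
Import numFieldNormedType.Exports.
Local Open Scope ring_scope.
Local Open Scope classical_set_scope.

Lemma comp_le_pnorm {R : realType} {p n : nat} (v : 'rV[R]_n) (k : 'I_n) :
  (p = 1%N \/ p = 2%N) -> `|v ord0 k| <= pnorm p v.
Proof.
have H : forall q : nat, `|v ord0 k| ^+ q <= \sum_(j < n) `|v ord0 j| ^+ q.
  move=> q; rewrite (bigD1 k) //= lerDl; apply: sumr_ge0 => j _.
  exact: exprn_ge0.
rewrite /pnorm; case=> ->.
  rewrite invr1 powRr1; last by apply: sumr_ge0 => j _; rewrite expr1.
  by have := H 1%N; rewrite expr1.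
rewrite powR12_sqrt; last by apply: sumr_ge0 => j _; exact: exprn_ge0.
rewrite -[X in X <= _]normr_id -sqrtr_sqr.
exact: ler_wsqrtr (H 2%N).
Qed.

Theorem theorem4 (R : realType) (p L : nat) (N : nat -> nat)
  (D : forall l : nat, set 'rV[R]_(N l))
  (u uh : forall i : nat, 'rV[R]_(N i) -> 'rV[R]_(N i.-1))
  (lu lf : nat -> R) :
  (p = 1%N \/ p = 2%N) -> (1 <= L)%N ->
  (forall l, (l <= L)%N -> compact (D l)) ->
  (forall l, (1 <= l <= L)%N -> forall x, D l x -> D l.-1 (u l x)) ->
  (forall l, (1 <= l <= L)%N -> {within D l, continuous (u l)}) ->
  (forall l, (1 <= l <= L)%N -> lipschitz_pnorm_on p (D l) (u l) (lu l)) ->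
  (forall l, (l <= L)%N -> lipschitz_pnorm_on p (D l) (@compose_layers R N u l) (lf l)) ->
  lf 0%N = 1 ->
  (forall l, (1 <= l <= L)%N -> forall x, D l x -> D l.-1 (uh l x)) ->
  forall (l : nat), (1 <= l <= L)%N ->
  forall (x : 'rV[R]_(N l)), D l x ->
  forall (xh : forall i : nat, 'rV[R]_(N i)),
    xh l = x ->
    (forall i, (1 <= i <= l)%N -> xh i.-1 = uh i (xh i)) ->
  forall k : 'I_(N 0%N),
    `|(@compose_layers R N u l x - @compose_layers R N uh l x) ord0 k|
      <= \sum_(1 <= i < l.+1) pnorm p (u i (xh i) - uh i (xh i)) * lf i.-1.
Proof.
move=> hp _ _ uD _ _ flip _ uhD l /andP[l1 lL] x Dx xh xhl xhS k.
have Dxh : forall m, (m <= l)%N -> D (l - m)%N (xh (l - m)%N).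
  elim=> [|m IH] hm; first by rewrite subn0 xhl.
  have := IH (ltnW hm); set i := (l - m)%N => Di.
  have -> : (l - m.+1)%N = i.-1 by rewrite /i; lia.
  rewrite xhS; last by rewrite /i; apply/andP; split; lia.
  apply: uhD => //; rewrite /i; apply/andP; split; lia.
have Dxh' : forall i, (i <= l)%N -> D i (xh i).
  move=> i hi; have := Dxh (l - i)%N (leq_subr _ _).
  by rewrite subKn.
have Ch : forall j, (j <= l)%N -> compose_layers uh (xh j) = xh 0%N.
  elim=> [|j IH] hj //=.
  by rewrite -xhS ?IH ?(ltnW hj) //; apply/andP; split.
rewrite -xhl Ch //.
set g := fun i => compose_layers u (xh i).
have -> : xh 0%N = g 0%N by [].
have -> : compose_layers u (xh l) = g l by [].
have : (l <= l)%N by [].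
elim: {1 3 4}l => [|j IH] hj.
  by rewrite subrr mxE normr0 big_geq.
rewrite big_nat_recr //=.
have -> : g j.+1 - g 0%N = (g j.+1 - g j) + (g j - g 0%N) by rewrite subrKA.
rewrite mxE; apply: le_trans (ler_normD _ _) _; rewrite addrC; apply: lerD; last exact: IH (ltnW hj).
apply: le_trans (comp_le_pnorm (g j.+1 - g j) k hp) _.
rewrite mulrC /g /=.
have -> : xh j = uh j.+1 (xh j.+1) by apply: (xhS j.+1); apply/andP; split.
apply: flip; first lia.
- apply: (uD j.+1); first (apply/andP; split; lia).
  exact: Dxh'.
- apply: (uhD j.+1); first (apply/andP; split; lia).
  exact: Dxh'.
Qed.
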